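(* Let $X$ be a non-empty set and let $\mathcal{U}\subseteq P(X)$ be anti-closed under finite intersections. Then $\mathcal{U}$ is anti-closed under arbitrary unions.
   Context: For a family $\mathcal{U}\subseteq P(X)$: $\mathcal{U}$ is anti-closed under finite intersections if for every $n\in\mathbb{N}$ and all $A_1,\dots,A_n\in\mathcal{U}$ that are not all equal, $\bigcap_{i=1}^n A_i\notin\mathcal{U}$; $\mathcal{U}$ is anti-closed under arbitrary intersections if for every non-empty index set $J$ and all $A_i\in\mathcal{U}$ ($i\in J$) not all equal, $\bigcap_{i\in J}A_i\notin\mathcal{U}$; $\mathcal{U}$ is anti-closed under arbitrary unions if for every non-empty index set $J$ and all $A_i\in\mathcal{U}$ ($i\in J$) not all equal, $\bigcup_{i\in J}A_i\notin\mathcal{U}$. *)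

(* Defs.v *)
(* subsets of X are predicates X -> Prop; a family is a
   predicate on subsets. Set equality is Leibniz equality of predicates. *)
From Stdlib Require Import Arith.

Definition bigcap_fin {X : Type} (n : nat) (A : nat -> X -> Prop) : X -> Prop :=
  fun x => forall i, i < n -> A i x.

Definition bigcap {X J : Type} (A : J -> X -> Prop) : X -> Prop :=
  fun x => forall i : J, A i x.

Definition bigcup {X J : Type} (A : J -> X -> Prop) : X -> Prop :=
  fun x => exists i : J, A i x.

Definition anti_closed_fin_inter {X : Type} (U : (X -> Prop) -> Prop) : Prop :=
  forall (n : nat) (A : nat -> X -> Prop),
    (forall i, i < n -> U (A i)) ->
    (exists i j, i < n /\ j < n /\ A i <> A j) ->
    ~ U (bigcap_fin n A).

Definition anti_closed_arb_union {X : Type} (U : (X -> Prop) -> Prop) : Prop :=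
  forall (J : Type) (A : J -> X -> Prop),
    inhabited J ->
    (forall i, U (A i)) ->
    (exists i j, A i <> A j) ->
    ~ U (bigcup A).

(* Main.v *)
Require Import Defs.
From Stdlib Require Import Arith Lia FunctionalExtensionality PropExtensionality Classical.

Lemma sub_eq {X J : Type} (U : (X -> Prop) -> Prop) (A : J -> X -> Prop) (k : J) :
  anti_closed_fin_inter U -> U (A k) -> U (bigcup A) -> A k = bigcup A.
Proof.
  intros H Uk UB.
  destruct (classic (A k = bigcup A)) as [E|NE]; [exact E|exfalso].
  set (F := fun i : nat => if Nat.eqb i 0 then A k else bigcup A).
  apply (H 2 F).
  - intros i Hi. unfold F. destruct (Nat.eqb i 0); auto.
  - exists 0, 1. simpl. repeat split; auto.
  - replace (bigcap_fin 2 F) with (A k); auto.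
    apply functional_extensionality; intro x; apply propositional_extensionality.
    unfold bigcap_fin, F; split.
    + intros Hx i Hi. destruct (Nat.eqb i 0); auto. exists k; auto.
    + intros Hx. specialize (Hx 0 ltac:(lia)). simpl in Hx. exact Hx.
Qed.

Theorem mainTheorem4 (X : Type) (hX : inhabited X) (U : (X -> Prop) -> Prop) :
  anti_closed_fin_inter U -> anti_closed_arb_union U.
Proof.
  intros H J A _ HU [i [j Hij]] UB.
  apply Hij. rewrite (sub_eq U A i H (HU i) UB), (sub_eq U A j H (HU j) UB). reflexivity.
Qed.
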